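(* Let $n\ge 1$ and $s\geq 3$ be integers. There exists a sudoku array of type $\mathrm{SA}(s,n)$ if and only if there exist $s-2$ mutually orthogonal sudoku solutions of order $n^2$.
   Context: A sudoku solution of order $n^2$ is an $n^2\times n^2$ Latin square on $n^2$ symbols in which, in addition, each symbol appears exactly once in each of the $n^2$ canonical $n\times n$ subsquares (the subsquares formed by rows $an,\dots,an+n-1$ and columns $bn,\dots,bn+n-1$, $0\le a,b\le n-1$). Two Latin squares of the same order are orthogonal if, upon superimposition, each ordered pair of symbols appears exactly once; a family is mutually orthogonal if its members are pairwise orthogonal. A sudoku array of type $\mathrm{SA}(s,n)$ is a $2s\times n^4$ array with entries from an alphabet of size $n$, whose rows are partitioned into $s$ bands of two rows each and labeled $(i,j)$, $1\le i\le s$, $j\in\{1,2\}$ (row $(i,j)$ is the $j$-th row of the $i$-th band). A set $T$ of $4$ rows is top-justified if whenever row $(i,2)\in T$ then also $(i,1)\in T$; it is sudoku top-justified if it is top-justified and moreover, for every $i\ge 3$, $(i,1)\in T$ implies $(i,2)\in T$. The requirement is: for every sudoku top-justified set $T$ of $4$ rows, the $4\times n^4$ subarray formed by the rows in $T$ contains each $4$-tuple over the alphabet exactly once as a column. *)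

(* Defs.v *)
From mathcomp Require Import all_boot.
Set Implicit Arguments. Unset Strict Implicit. Unset Printing Implicit Defensive.

Definition square (n : nat) := 'I_(n ^ 2) -> 'I_(n ^ 2) -> 'I_(n ^ 2).

Definition latin_square (n : nat) (L : square n) : Prop :=
  (forall (r x : 'I_(n ^ 2)), #|[set c | L r c == x]| = 1) /\
  (forall (c x : 'I_(n ^ 2)), #|[set r | L r c == x]| = 1).

Definition sudoku_solution (n : nat) (L : square n) : Prop :=
  latin_square L /\
  forall (a b : 'I_n) (x : 'I_(n ^ 2)),
    #|[set rc : 'I_(n ^ 2) * 'I_(n ^ 2) |
        [&& rc.1 %/ n == a, rc.2 %/ n == b & L rc.1 rc.2 == x]]| = 1.

Definition orthogonal (n : nat) (L1 L2 : square n) : Prop :=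
  forall (p : 'I_(n ^ 2) * 'I_(n ^ 2)),
    #|[set rc : 'I_(n ^ 2) * 'I_(n ^ 2) |
        (L1 rc.1 rc.2, L2 rc.1 rc.2) == p]| = 1.

Definition MOSS (k n : nat) : Prop :=
  exists F : 'I_k -> square n,
    (forall i, sudoku_solution (F i)) /\
    (forall i j : 'I_k, i != j -> orthogonal (F i) (F j)).

(* Rows of a sudoku array are labelled (i, j) with i : 'I_s (band, 0-indexed,
   so band i here is band i+1 of the paper) and j : 'I_2 (j = 0 is the first
   row of the band, j = 1 the second). *)
Definition row_label (s : nat) := ('I_s * 'I_2)%type.

Definition sarray (s n : nat) := row_label s -> 'I_(n ^ 4) -> 'I_n.

Definition top_justified (s : nat) (T : {set row_label s}) : Prop :=
  forall i : 'I_s, (i, ord_max : 'I_2) \in T -> (i, ord0 : 'I_2) \in T.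

(* paper: for every band i >= 3 (1-indexed), i.e. i >= 2 0-indexed *)
Definition sudoku_top_justified (s : nat) (T : {set row_label s}) : Prop :=
  top_justified T /\
  forall i : 'I_s, 2 <= i -> (i, ord0 : 'I_2) \in T -> (i, ord_max : 'I_2) \in T.

(* The subarray on rows T contains each |T|-tuple exactly once as a column:
   for every assignment g of symbols to the rows of T, exactly one column
   agrees with g on all rows of T. *)
Definition each_tuple_once (s n : nat) (A : sarray s n) (T : {set row_label s})
  : Prop :=
  forall g : {ffun row_label s -> 'I_n},
    #|[set c : 'I_(n ^ 4) | [forall r in T, A r c == g r]]| = 1.

Definition is_SA (s n : nat) (A : sarray s n) : Prop :=
  forall T : {set row_label s},
    #|T| = 4 -> sudoku_top_justified T -> each_tuple_once A T.

Definition SA_exists (s n : nat) : Prop := exists A : sarray s n, is_SA A.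

(* Main.v *)
Require Import Defs.
From mathcomp Require Import all_boot.
Set Implicit Arguments. Unset Strict Implicit. Unset Printing Implicit Defensive.

Lemma card1_eq (T : finType) (S : {set T}) x y :
  #|S| = 1 -> x \in S -> y \in S -> x = y.
Proof. by move/eqP/cards1P=> [z ->]; rewrite !inE => /eqP-> /eqP->. Qed.

Lemma card1I (T : finType) (S : {set T}) x :
  x \in S -> (forall y, y \in S -> y = x) -> #|S| = 1.
Proof.
move=> Hx H; apply/eqP/cards1P; exists x; apply/setP=> y; rewrite inE.
by apply/idP/eqP => [/H//|->].
Qed.

Lemma card_transfer (X Y : finType) (P : pred X) (Q : pred Y)
  (f : X -> Y) (h : Y -> X) :
  (forall x, P x -> Q (f x)) -> (forall y, Q y -> P (h y)) ->
  (forall x, P x -> h (f x) = x) -> (forall y, Q y -> f (h y) = y) ->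
  #|[set x | P x]| = #|[set y | Q y]|.
Proof.
move=> PQ QP hf fh.
rewrite -(card_in_imset (f:=f)); last first.
  by move=> x1 x2; rewrite !inE => H1 H2 E; rewrite -(hf _ H1) -(hf _ H2) E.
apply: eq_card => y; rewrite !inE; apply/imsetP/idP.
  by case=> x; rewrite inE => Px ->; apply: PQ.
by move=> Qy; exists (h y); rewrite ?inE ?fh //; apply: QP.
Qed.

Lemma card4 (T : finType) (a b c d : T) :
  uniq [:: a; b; c; d] -> #|[set a; b; c; d]| = 4.
Proof.
move=> U; have <- : #|[:: a; b; c; d]| = 4 by rewrite (card_uniqP U).
by apply: eq_card => x; rewrite !inE orbA orbA.
Qed.

Lemma sub4 (T : finType) (S : {set T}) (a b c d : T) :
  S \subset [set a; b; c; d] -> #|S| = 4 ->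
  [/\ a \in S, b \in S, c \in S & d \in S].
Proof.
move=> sS cS.
have le4 : #|[set a; b; c; d]| <= 4.
  have -> : #|[set a; b; c; d]| = #|[:: a; b; c; d]|.
    by apply: eq_card => x; rewrite !inE orbA orbA.
  exact: card_size.
have /eqP E : S == [set a; b; c; d] by rewrite eqEcard sS cS.
by rewrite E !inE !eqxx /= !orbT.
Qed.

Lemma forall4 (T : finType) (a b c d : T) (P : pred T) :
  [forall r in [set a; b; c; d], P r] = [&& P a, P b, P c & P d].
Proof.
apply/forall_inP/and4P.
  by move=> H; split; apply: H; rewrite !inE eqxx ?orbT.
by case=> Ha Hb Hc Hd r; rewrite !inE -!orbA => /or4P [] /eqP->.
Qed.

Section Digits.
Variable n : nat.
Hypothesis n_gt0 : 0 < n.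

Lemma hi_lt (r : 'I_(n ^ 2)) : r %/ n < n.
Proof. by rewrite ltn_divLR // mulnn. Qed.
Definition hi (r : 'I_(n ^ 2)) : 'I_n := Ordinal (hi_lt r).
Lemma lo_lt (r : 'I_(n ^ 2)) : r %% n < n.
Proof. exact: ltn_pmod. Qed.
Definition lo (r : 'I_(n ^ 2)) : 'I_n := Ordinal (lo_lt r).
Lemma mk_lt (a b : 'I_n) : a * n + b < n ^ 2.
Proof.
rewrite -mulnn; apply: (@leq_trans (a.+1 * n)); first by rewrite mulSn [n + _]addnC ltn_add2l.
by rewrite leq_mul2r ltn_ord orbT.
Qed.
Definition mk (a b : 'I_n) : 'I_(n ^ 2) := Ordinal (mk_lt a b).

Lemma mk_hilo r : mk (hi r) (lo r) = r.
Proof. by apply: val_inj; rewrite /= -divn_eq. Qed.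
Lemma hi_mk a b : hi (mk a b) = a.
Proof. by apply: val_inj; rewrite /= divnMDl // divn_small ?addn0. Qed.
Lemma lo_mk a b : lo (mk a b) = b.
Proof. by apply: val_inj; rewrite /= modnMDl modn_small. Qed.
Lemma mk_eq a b v : (mk a b == v) = (a == hi v) && (b == lo v).
Proof.
apply/eqP/andP => [<-|[/eqP-> /eqP->]]; last exact: mk_hilo.
by rewrite hi_mk lo_mk.
Qed.
End Digits.

Lemma I2ne : (ord_max == ord0 :> 'I_2) = false. Proof. by []. Qed.
Lemma I2ne' : (ord0 == ord_max :> 'I_2) = false. Proof. by []. Qed.
Lemma I2cases (j : 'I_2) : j = ord0 \/ j = ord_max.
Proof. by case: j => [[|[|]]] // ?; [left|right]; apply: val_inj. Qed.

Section Rows.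
Variable m : nat.
Local Notation s := m.+3.
Definition b0 : 'I_s := ord0.
Definition b1 : 'I_s := Ordinal (isT : 1 < s).
Definition bandk (k : 'I_m.+1) : 'I_s := rshift 2 k.
Definition Tb (i j : 'I_s) : {set row_label s} :=
  [set (i, ord0); (i, ord_max); (j, ord0); (j, ord_max)].
Definition Tsq (i : 'I_s) : {set row_label s} :=
  [set (b0, ord0); (b1, ord0); (i, ord0); (i, ord_max)].

Lemma Tb_card i j : i != j -> #|Tb i j| = 4.
Proof.
move=> ij; apply: card4; rewrite /= !inE !xpair_eqE !eqxx ?I2ne ?I2ne' /=.
by rewrite !andbF !andbT orbF (negbTE ij).
Qed.

Lemma Tb_stj i j : sudoku_top_justified (Tb i j).
Proof.
rewrite /Tb; split.
  by move=> x; rewrite !inE !xpair_eqE !eqxx ?I2ne ?I2ne' !andbF !andbT !orbF.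
by move=> x _; rewrite !inE !xpair_eqE !eqxx ?I2ne ?I2ne' !andbF !andbT !orbF.
Qed.

Lemma Tsq_card (i : 'I_s) : 2 <= i -> #|Tsq i| = 4.
Proof.
move=> hi; apply: card4; rewrite /= !inE !xpair_eqE !eqxx ?I2ne ?I2ne' /=.
rewrite !andbF !andbT !orbF.
have ne0 : (b0 == i) = false by apply/negbTE; apply/eqP => E; rewrite -E in hi.
have ne1 : (b1 == i) = false by apply/negbTE; apply/eqP => E; rewrite -E in hi.
by rewrite ne0 ne1.
Qed.

Lemma Tsq_stj (i : 'I_s) : 2 <= i -> sudoku_top_justified (Tsq i).
Proof.
move=> hi; rewrite /Tsq; split.
  move=> x; rewrite !inE !xpair_eqE !eqxx ?I2ne ?I2ne' !andbF !andbT !orbF. by move=> /= ->; rewrite orbT.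
move=> x hx; rewrite !inE !xpair_eqE !eqxx ?I2ne ?I2ne' !andbF !andbT !orbF /=. 
have ne0 : (x == b0) = false by apply/negbTE; apply/eqP => E; rewrite E in hx.
have ne1 : (x == b1) = false by apply/negbTE; apply/eqP => E; rewrite E in hx.
by rewrite ne0 ne1.
Qed.

Lemma bandk_ge2 k : 2 <= bandk k. Proof. by []. Qed.
Lemma bandk_inj : injective bandk.
Proof. by move=> k l /(congr1 val) /= /eqP; rewrite eqn_add2l => /eqP /val_inj. Qed.
End Rows.

Section SAtoMOSS.
Variables m n : nat.
Hypothesis n_gt0 : 0 < n.
Local Notation s := m.+3.
Local Notation hi := (hi n_gt0).
Local Notation lo := (lo n_gt0).
Variable A : sarray s n.
Hypothesis hA : is_SA A.

Definition dig (j : 'I_2) (v : 'I_(n ^ 2)) := if j == ord0 then hi v else lo v.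
Definition bvA (i : 'I_s) (c : 'I_(n ^ 4)) : 'I_(n ^ 2) :=
  mk (A (i, ord0) c) (A (i, ord_max) c).

Lemma bands_once (i j : 'I_s) (vb : 'I_s -> 'I_(n ^ 2)) : i != j ->
  #|[set c | (bvA i c == vb i) && (bvA j c == vb j)]| = 1.
Proof.
move=> ij; have := hA (Tb_card ij) (Tb_stj i j) [ffun r => dig r.2 (vb r.1)].
move=> H1; apply: (etrans _ H1); apply: eq_card => c; rewrite !inE /Tb forall4 !ffunE /dig /=.
by rewrite /bvA !mk_eq !andbA.
Qed.

Lemma sq_once (i : 'I_s) (a b : 'I_n) (v : 'I_(n ^ 2)) : 2 <= i ->
  #|[set c | [&& A (b0 m, ord0) c == a, A (b1 m, ord0) c == b & bvA i c == v]]| = 1.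
Proof.
move=> hi2.
have := hA (Tsq_card hi2) (Tsq_stj hi2)
  [ffun r => if r.1 == b0 m then a else if r.1 == b1 m then b else dig r.2 v].
have ne0 : (i == b0 m) = false by apply/negbTE; apply/eqP => E; rewrite E in hi2.
have ne1 : (i == b1 m) = false by apply/negbTE; apply/eqP => E; rewrite E in hi2.
move=> H1; apply: (etrans _ H1); apply: eq_card => c; rewrite !inE /Tsq forall4 !ffunE /dig /=.
by rewrite ne0 ne1 /bvA mk_eq.
Qed.

Definition phi0 (c : 'I_(n ^ 4)) : 'I_(n ^ 2) * 'I_(n ^ 2) := (bvA (b0 m) c, bvA (b1 m) c).

Lemma phi0_inj : injective phi0.
Proof.
move=> c1 c2 E.
have E0 : bvA (b0 m) c2 = bvA (b0 m) c1 by rewrite -[bvA (b0 m) c1]/((phi0 c1).1) E.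
have E1 : bvA (b1 m) c2 = bvA (b1 m) c1 by rewrite -[bvA (b1 m) c1]/((phi0 c1).2) E.
have ne : b0 m != b1 m by [].
apply: (card1_eq (bands_once (fun i => bvA i c1) ne)); by rewrite inE /= ?E0 ?E1 !eqxx.
Qed.

Lemma phi0_bij : bijective phi0.
Proof.
apply: (inj_card_bij phi0_inj).
by rewrite card_prod !card_ord -expnD.
Qed.

Variable col : 'I_(n ^ 2) * 'I_(n ^ 2) -> 'I_(n ^ 4).
Hypothesis colK : cancel col phi0.
Hypothesis phi0K : cancel phi0 col.

Lemma colE c : col (bvA (b0 m) c, bvA (b1 m) c) = c.
Proof. exact: phi0K. Qed.
Lemma bvA0 R C : bvA (b0 m) (col (R, C)) = R.
Proof. by have := colK (R, C); case. Qed.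
Lemma bvA1 R C : bvA (b1 m) (col (R, C)) = C.
Proof. by have := colK (R, C); case. Qed.

Definition L (k : 'I_m.+1) : square n := fun R C => bvA (bandk k) (col (R, C)).

Lemma bandk_ne0 k : (bandk k == b0 m) = false. Proof. by []. Qed.
Lemma bandk_ne1 k : (bandk k == b1 m) = false. Proof. by []. Qed.

Lemma L_sudoku k : sudoku_solution (L k).
Proof.
have ne0 : b0 m != bandk k by [].
have ne1 : b1 m != bandk k by [].
split; first split.
- move=> r x.
  have := bands_once (fun i => if i == b0 m then r else x) ne0.
  rewrite eqxx bandk_ne0 => H1; apply: (etrans _ H1).
  apply: (card_transfer (f := fun C => col (r, C)) (h := fun c => (phi0 c).2)).
  + by move=> C /= H; rewrite bvA0 eqxx.
  + by move=> c /andP [/eqP <- /eqP <-]; rewrite /L /= colE.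
  + by move=> C _; rewrite colK.
  + by move=> c /andP [/eqP <- _]; rewrite /= colE.
- move=> cc x.
  have := bands_once (fun i => if i == b1 m then cc else x) ne1.
  rewrite eqxx bandk_ne1 => H1; apply: (etrans _ H1).
  apply: (card_transfer (f := fun R => col (R, cc)) (h := fun c => (phi0 c).1)).
  + by move=> R /= H; rewrite bvA1 eqxx.
  + by move=> c /andP [/eqP <- /eqP <-]; rewrite /L /= colE.
  + by move=> R _; rewrite colK.
  + by move=> c /andP [/eqP <- _]; rewrite /= colE.
- move=> a b x.
  apply: (etrans _ (sq_once a b x (bandk_ge2 k))).
  apply: (card_transfer (f := col) (h := phi0)).
  + move=> [R C] /= /and3P [Ha Hb Hx].
    have h0 : A (b0 m, ord0) (col (R, C)) = hi R.
      by have E := bvA0 R C; rewrite /bvA in E; rewrite -[R in hi R]E hi_mk.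
    have h1 : A (b1 m, ord0) (col (R, C)) = hi C.
      by have E := bvA1 R C; rewrite /bvA in E; rewrite -[C in hi C]E hi_mk.
    by apply/and3P; split; rewrite ?h0 ?h1.



  + move=> c /and3P [Ha Hb Hx] /=.
    rewrite /L colE Hx andbT.
    change ((hi (bvA (b0 m) c) == a) && (hi (bvA (b1 m) c) == b)).
    by rewrite /bvA !hi_mk Ha Hb.
  + by move=> rc _; rewrite colK.
  + by move=> c _; rewrite phi0K.
Qed.

Lemma L_orth k l : k != l -> orthogonal (L k) (L l).
Proof.
move=> kl p.
have ne : bandk k != bandk l by apply: contra kl => /eqP/bandk_inj ->.
have := bands_once (fun i => if i == bandk k then p.1 else p.2) ne.
rewrite eqxx eq_sym (negbTE ne) => H1; apply: (etrans _ H1).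
apply: (card_transfer (f := col) (h := phi0)).
+ by move=> [R C] /=; rewrite /L.
+ by move=> c /=; rewrite /L colE.
+ by move=> rc _; rewrite colK.
+ by move=> c _; rewrite phi0K.
Qed.

End SAtoMOSS.

Lemma SA_to_MOSS m n : 0 < n -> SA_exists m.+3 n -> MOSS m.+1 n.
Proof.
move=> n_gt0 [A hA].
have [col phi0K colK] := phi0_bij n_gt0 hA.
exists (L A col); split.
  by move=> k; apply: (L_sudoku n_gt0 hA colK phi0K).
by move=> k l; apply: (L_orth n_gt0 hA colK phi0K).
Qed.

Lemma ex_inj n : exists f : 'I_(n ^ 4) -> 'I_(n ^ 2) * 'I_(n ^ 2), injective f.
Proof.
have E : n ^ 4 = #|{: 'I_(n ^ 2) * 'I_(n ^ 2)}| by rewrite card_prod !card_ord -expnD.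
exists (fun c => enum_val (cast_ord E c)).
by move=> c1 c2 /enum_val_inj /(congr1 val) /= /val_inj.
Qed.

Lemma each_from_inj s n (A : sarray s n) (T : {set row_label s}) :
  #|T| = 4 ->
  (forall c1 c2, (forall r, r \in T -> A r c1 = A r c2) -> c1 = c2) ->
  each_tuple_once A T.
Proof.
move=> cT injA.
pose sT := {r : row_label s | r \in T}.
pose psi (c : 'I_(n ^ 4)) : {ffun sT -> 'I_n} := [ffun r => A (val r) c].
have psi_inj : injective psi.
  move=> c1 c2 E; apply: injA => r Hr.
  by have := congr1 (fun f : {ffun sT -> 'I_n} => f (Sub r Hr : sT)) E; rewrite /psi !ffunE.
have [psiI psiK psiIK] : bijective psi.
  apply: (inj_card_bij psi_inj).
  rewrite card_ffun card_ord card_sig.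
  have -> : #|[pred x | x \in T]| = #|T| by apply: eq_card.
  by rewrite cT card_ord.
move=> g; pose g' : {ffun sT -> 'I_n} := [ffun r => g (val r)].
apply: (@card1I _ _ (psiI g')).
  rewrite inE; apply/forall_inP => r Hr.
  have := congr1 (fun f : {ffun sT -> 'I_n} => f (Sub r Hr : sT)) (psiIK g'); rewrite /psi /g' !ffunE /=.
  by move=> ->.
move=> y; rewrite inE => /forall_inP H.
have -> : g' = psi y.
  by apply/ffunP => r; rewrite /psi /g' !ffunE; apply/esym/eqP/H/(valP r).
by rewrite psiK.
Qed.

Section MOSStoSA.
Variables m n : nat.
Hypothesis n_gt0 : 0 < n.
Local Notation s := m.+3.
Local Notation hi := (hi n_gt0).
Local Notation lo := (lo n_gt0).
Local Notation dig := (dig n_gt0).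
Variable F : 'I_m.+1 -> square n.
Hypothesis hS : forall i, sudoku_solution (F i).
Hypothesis hO : forall i j, i != j -> orthogonal (F i) (F j).

Definition idx (i : 'I_s) : 'I_m.+1 := inord (i - 2).
Lemma idxE (i : 'I_s) : 2 <= i -> (idx i : nat) = i - 2.
Proof.
move=> hi2; rewrite /idx inordK //.
by rewrite ltn_subLR //; exact: ltn_ord.
Qed.

Definition bv (i : 'I_s) (x : 'I_(n ^ 2) * 'I_(n ^ 2)) : 'I_(n ^ 2) :=
  if i == b0 m then x.1 else if i == b1 m then x.2 else F (idx i) x.1 x.2.

Lemma bv_b0 x : bv (b0 m) x = x.1. Proof. by rewrite /bv eqxx. Qed.
Lemma bv_b1 x : bv (b1 m) x = x.2. Proof. by []. Qed.
Lemma bv_ge2 (i : 'I_s) x : 2 <= i -> bv i x = F (idx i) x.1 x.2.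
Proof.
move=> hi2; rewrite /bv.
have -> : (i == b0 m) = false by apply/negbTE; apply/eqP => E; rewrite E in hi2.
have -> : (i == b1 m) = false by apply/negbTE; apply/eqP => E; rewrite E in hi2.
by [].
Qed.

Definition agree (T : {set row_label s}) (x1 x2 : 'I_(n ^ 2) * 'I_(n ^ 2)) :=
  forall r, r \in T -> dig r.2 (bv r.1 x1) = dig r.2 (bv r.1 x2).

Lemma agree_band T x1 x2 i : agree T x1 x2 -> (i, ord0) \in T -> (i, ord_max) \in T ->
  bv i x1 = bv i x2.
Proof.
move=> H h0 h1; have E0 := H _ h0; have E1 := H _ h1.
rewrite /dig /= ?eqxx ?I2ne in E0 E1.
by rewrite -(mk_hilo n_gt0 (bv i x1)) -(mk_hilo n_gt0 (bv i x2)) E0 E1.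
Qed.

Lemma bcases (k : 'I_s) : k = b0 m \/ k = b1 m \/ 2 <= k.
Proof.
case: k => [[|[|k]]] Hk; [left|right; left|right; right] => //; exact: val_inj.
Qed.

Lemma full_band (T : {set row_label s}) (i : 'I_s) j :
  sudoku_top_justified T -> 2 <= i -> (i, j) \in T ->
  (i, ord0) \in T /\ (i, ord_max) \in T.
Proof.
move=> [tj stj] hi2; case: (I2cases j) => -> H.
  by split => //; apply: stj.
by split => //; apply: tj.
Qed.

Lemma agree_eq (T : {set row_label s}) x1 x2 :
  #|T| = 4 -> sudoku_top_justified T -> agree T x1 x2 -> x1 = x2.
Proof.
move=> cT [tj stj] H.
have stjT : sudoku_top_justified T by [].
case: x1 H => R1 C1; case: x2 => R2 C2 H.
case: (boolP [exists i : 'I_s, (2 <= i) && ((i, ord0) \in T)]); last first.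
  move=> /existsPn nE.
  have sub : T \subset [set (b0 m, ord0); (b0 m, ord_max); (b1 m, ord0); (b1 m, ord_max)].
    apply/subsetP => [[k j]] Hkj.
    case: (bcases k) => [->|[->|hk]].
    - by case: (I2cases j) => ->; rewrite !inE eqxx ?orbT.
    - by case: (I2cases j) => ->; rewrite !inE eqxx ?orbT.
    - have [h0 _] := full_band stjT hk Hkj.
      by have := nE k; rewrite hk h0.
  have [h00 h01 h10 h11] := sub4 sub cT.
  have := agree_band H h00 h01; have := agree_band H h10 h11.
  by rewrite !bv_b0 !bv_b1 /= => -> ->.
case/existsP => i /andP [hi2 hi0].
have [_ hi1] := full_band stjT hi2 hi0.
have Ei := agree_band H hi0 hi1; rewrite !bv_ge2 //= in Ei.
case: (boolP [exists j : 'I_s, [&& 2 <= j, j != i & (j, ord0) \in T]]).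
  case/existsP => j /and3P [hj2 ji hj0].
  have [_ hj1] := full_band stjT hj2 hj0.
  have Ej := agree_band H hj0 hj1; rewrite !bv_ge2 //= in Ej.
  have ne : idx i != idx j.
    apply: contra ji => /eqP /(congr1 (@nat_of_ord _)); rewrite !idxE // => E.
    by apply/eqP/val_inj; rewrite /= -(subnK hi2) -(subnK hj2) E.
  have := hO ne (F (idx i) R1 C1, F (idx j) R1 C1).
  move/card1_eq => /(_ (R1, C1) (R2, C2)).
  by rewrite !inE /= -Ei -Ej eqxx; apply.
move=> /existsPn nE.
have Ti : forall k j, (k, j) \in T -> 2 <= k -> k = i.
  move=> k j Hkj hk; have [h0 _] := full_band stjT hk Hkj.
  by have := nE k; rewrite hk h0 andbT /= => /negPn /eqP.
case: (boolP ((b0 m, ord_max) \in T)) => [h01|n01].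
  have h00 := tj _ h01.
  have ER := agree_band H h00 h01; rewrite !bv_b0 /= in ER; subst R2.
  have := (hS (idx i)).1.1 R1 (F (idx i) R1 C1).
  move/card1_eq => /(_ C1 C2).
  by rewrite !inE Ei eqxx => /(_ isT isT) ->.
case: (boolP ((b1 m, ord_max) \in T)) => [h11|n11].
  have h10 := tj _ h11.
  have EC := agree_band H h10 h11; rewrite !bv_b1 /= in EC; subst C2.
  have := (hS (idx i)).1.2 C1 (F (idx i) R1 C1).
  move/card1_eq => /(_ R1 R2).
  by rewrite !inE Ei eqxx => /(_ isT isT) ->.
have sub : T \subset [set (b0 m, ord0); (b1 m, ord0); (i, ord0); (i, ord_max)].
  apply/subsetP => [[k j]] Hkj.
  case: (bcases k) => [Ek|[Ek|hk]].
  - rewrite Ek in Hkj *; case: (I2cases j) Hkj => -> Hkj; first by rewrite !inE eqxx.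
    by rewrite Hkj in n01.
  - rewrite Ek in Hkj *; case: (I2cases j) Hkj => -> Hkj; first by rewrite !inE eqxx ?orbT.
    by rewrite Hkj in n11.
  - rewrite (Ti _ _ Hkj hk).
    by case: (I2cases j) => ->; rewrite !inE eqxx ?orbT.
have [h00 h10 _ _] := sub4 sub cT.
have ER := H _ h00; have EC := H _ h10.
rewrite /= !bv_b0 !bv_b1 /dig /= in ER EC.
have := (hS (idx i)).2 (hi R1) (hi C1) (F (idx i) R1 C1).
move/card1_eq => /(_ (R1, C1) (R2, C2)).
rewrite !inE /= Ei !eqxx.
have ER' : R2 %/ n = R1 %/ n by have := congr1 (@nat_of_ord _) ER.
have EC' : C2 %/ n = C1 %/ n by have := congr1 (@nat_of_ord _) EC.
by rewrite ER' EC' !eqxx; apply.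
Qed.

Variable cell : 'I_(n ^ 4) -> 'I_(n ^ 2) * 'I_(n ^ 2).
Hypothesis cell_inj : injective cell.

Definition Aof : sarray s n := fun r c => dig r.2 (bv r.1 (cell c)).

Lemma Aof_SA : is_SA Aof.
Proof.
move=> T cT stj; apply: (each_from_inj cT) => c1 c2 H.
by apply: cell_inj; apply: (agree_eq cT stj) => r /H.
Qed.
End MOSStoSA.

Lemma MOSS_to_SA m n : 0 < n -> MOSS m.+1 n -> SA_exists m.+3 n.
Proof.
move=> n_gt0 [F [hS hO]].
have [cell cell_inj] := ex_inj n.
by exists (Aof n_gt0 F cell); apply: Aof_SA.
Qed.

Theorem theorem2p1 (n s : nat) (hn : 1 <= n) (hs : 3 <= s) :
  SA_exists s n <-> MOSS (s - 2) n.
Proof.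
case: s hs => [|[|[|m]]] // _.
have -> : m.+3 - 2 = m.+1 by rewrite subSS subSS subn0.
split; [exact: SA_to_MOSS | exact: MOSS_to_SA].
Qed.
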